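(* For every $x\in(0,1/2]$, $$4x(1-x)\log_2\!\left(\frac{1}{x(1-x)}\right)\ \ge\ x\,G(1/x)\ \ge\ x(1-x)\left(4+\log\frac{1}{4x(1-x)}\right),$$ $$2x\log_2(1/x)\ \ge\ x\,G(1/x)\ \ge\ x\left(2+\log\frac{1}{2x}\right),$$ and $\displaystyle\lim_{x\to0^+}\frac{G(1/x)}{\log(1/x)}=1$.
   Context: $\log$ is the natural logarithm. $G:[2,\infty)\to\mathbb{R}$ is defined by $G(2)=2$ and, for $x\in(0,1/2)$, $G(1/x)=\dfrac{\gamma^2e^{\gamma}}{e^{\gamma}(\gamma-1)+1}$, where $\gamma>0$ is the unique solution of $x=\dfrac{e^{\gamma}(\gamma-1)+1}{(e^{\gamma}-1)^2}$. *)

(* Defs.v *)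
From Stdlib Require Import Reals ClassicalEpsilon.
From Coquelicot Require Import Coquelicot.
Open Scope R_scope.

Definition phi (g : R) : R := (exp g * (g - 1) + 1) / (exp g - 1) ^ 2.

(* For x in (0,1/2), the unique gamma > 0 with x = phi gamma (chosen by epsilon). *)
Definition gamma_of (x : R) : R :=
  epsilon (inhabits 0) (fun g => 0 < g /\ x = phi g).

Definition G (y : R) : R :=
  if Req_EM_T y 2 then 2
  else let g := gamma_of (1 / y) in
       g ^ 2 * exp g / (exp g * (g - 1) + 1).

Definition log2 (t : R) : R := ln t / ln 2.

(* Main.v *)
Require Import Defs.
From Stdlib Require Import Reals.
From Coquelicot Require Import Coquelicot.
Open Scope R_scope.
From Stdlib Require Import Lra Lia List Factorial ClassicalEpsilon.
Import ListNotations.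

Fixpoint ff (n i : nat) : R :=
  match i with O => 1 | S i' => (INR n - INR i') * ff n i' end.

Lemma ff_gt (n i : nat) : (n < i)%nat -> ff n i = 0.
Proof.
  revert n; induction i as [|i IH]; intros n H; [lia|].
  simpl. destruct (Nat.eq_dec n i) as [->|Hn].
  - ring.
  - rewrite IH by lia. ring.
Qed.

Lemma ff_le (n i : nat) : (i <= n)%nat -> ff n i * INR (fact (n - i)) = INR (fact n).
Proof.
  revert n; induction i as [|i IH]; intros n H.
  - simpl. rewrite Nat.sub_0_r. ring.
  - simpl ff. rewrite <- (IH n) by lia.
    replace (n - i)%nat with (S (n - S i)) by lia.
    rewrite fact_simpl, mult_INR, S_INR, minus_INR, S_INR by lia. ring.
Qed.

Definition tc (i : nat) (j : R) (n : nat) : R := ff n i * j ^ (n - i) / INR (fact n).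

Lemma term_series (i : nat) (j g : R) :
  is_series (fun n => tc i j n * g ^ n) (g ^ i * exp (j * g)).
Proof.
  assert (H0 := is_exp_Reals (j * g)). unfold is_pseries in H0.
  assert (H1 : is_series (fun k => g ^ i * ((j * g) ^ k * / INR (fact k))) (g ^ i * exp (j * g))).
  { apply (is_series_scal (K:=R_AbsRing) (V:=R_NormedModule) (g ^ i)) in H0.
    eapply is_series_ext; [|exact H0]. intros n. simpl.
    unfold scal; simpl; unfold mult; simpl. reflexivity. }
  destruct i as [|i].
  - eapply is_series_ext; [|exact H1]. intros n. unfold tc. simpl.
    rewrite Nat.sub_0_r, Rpow_mult_distr. field. apply INR_fact_neq_0.
  - apply (is_series_decr_n _ (S i)); [lia|].
    match goal with |- is_series _ ?l => replace l with (g ^ S i * exp (j * g)) end.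
    2:{ unfold plus, opp; simpl. rewrite sum_n_Reals.
        rewrite sum_eq_R0. { change (@zero R_AbelianGroup) with 0. ring. }
        intros k Hk. unfold tc. rewrite ff_gt by lia. unfold Rdiv. ring. }
    eapply is_series_ext; [|exact H1].
    intros n. unfold tc. replace (S i + n - S i)%nat with n by lia.
    assert (Hf := ff_le (S i + n) (S i) ltac:(lia)).
    replace (S i + n - S i)%nat with n in Hf by lia.
    rewrite pow_add, Rpow_mult_distr.
    assert (Hnz : ff (S i + n) (S i) <> 0) by (intro Hz; rewrite Hz, Rmult_0_l in Hf; symmetry in Hf; revert Hf; apply INR_fact_neq_0).
    rewrite <- Hf. unfold Rdiv. rewrite Rinv_mult. field_simplify; [reflexivity|split; [apply INR_fact_neq_0|exact Hnz]|apply INR_fact_neq_0].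
Qed.

Fixpoint ev (l : list (R * nat * R)) (g : R) : R :=
  match l with nil => 0 | (a, i, j) :: t => a * (g ^ i * exp (j * g)) + ev t g end.
Fixpoint co (l : list (R * nat * R)) (n : nat) : R :=
  match l with nil => 0 | (a, i, j) :: t => a * tc i j n + co t n end.

Lemma ev_series l g : is_series (fun n => co l n * g ^ n) (ev l g).
Proof.
  induction l as [|[[a i] j] t IH]; simpl.
  - assert (H := term_series 0 0 g).
    apply (is_series_scal (K:=R_AbsRing) (V:=R_NormedModule) 0) in H.
    match goal with |- is_series _ ?l => replace l with (scal 0 (g ^ 0 * exp (0 * g))) end.
    + eapply is_series_ext; [|exact H]. intros n. unfold scal; simpl; unfold mult; simpl. ring.
    + unfold scal; simpl; unfold mult; simpl. ring.
  - assert (H := term_series i j g).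
    apply (is_series_scal (K:=R_AbsRing) (V:=R_NormedModule) a) in H.
    assert (H2 := is_series_plus _ _ _ _ H IH).
    eapply is_series_ext; [|exact H2]. intros n. simpl.
    unfold plus, scal; simpl. unfold mult; simpl. ring.
Qed.

Lemma ev_nonneg l g : 0 <= g -> (forall n, 0 <= co l n) -> 0 <= ev l g.
Proof.
  intros Hg Hc. assert (H := ev_series l g).
  assert (Hl : Rbar_le 0 (ev l g)).
  { apply (is_lim_seq_le (fun _ => 0) (sum_n (fun n => co l n * g ^ n))).
    - intros n. rewrite sum_n_Reals. apply cond_pos_sum. intros k.
      apply Rmult_le_pos; [apply Hc|apply pow_le; exact Hg].
    - apply is_lim_seq_const.
    - exact H. }
  exact Hl.
Qed.

Fixpoint nu (l : list (R * nat * R)) (n : nat) : R :=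
  match l with nil => 0 | (a, i, j) :: t => a * (ff n i * j ^ (n - i)) + nu t n end.

Lemma co_nu l n : co l n = nu l n / INR (fact n).
Proof.
  induction l as [|[[a i] j] t IH]; simpl.
  - unfold Rdiv; ring.
  - rewrite IH. unfold tc. field. apply INR_fact_neq_0.
Qed.

Lemma ev_nonneg' l g : 0 <= g -> (forall n, 0 <= nu l n) -> 0 <= ev l g.
Proof.
  intros Hg H. apply ev_nonneg; auto. intros n. rewrite co_nu.
  apply Rdiv_le_0_compat; [apply H|apply INR_fact_lt_0].
Qed.

Lemma pow2_ge (m : nat) : 1 + INR m + INR m * (INR m - 1) / 2 + INR m * (INR m - 1) * (INR m - 2) / 6
  + INR m * (INR m - 1) * (INR m - 2) * (INR m - 3) / 24 <= 2 ^ m.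
Proof.
  induction m as [|m IH].
  - simpl. lra.
  - destruct m as [|[|[|m]]]; [simpl; lra|simpl; lra|simpl; lra|].
    set (k := S (S (S m))) in *.
    assert (Hk : 3 <= INR k) by (unfold k; rewrite !S_INR; pose proof (pos_INR m); lra).
    rewrite S_INR. change (2 ^ S k) with (2 * 2 ^ k). assert (0 <= INR k*(INR k-1)*(INR k-2)*(INR k-3)) by (repeat apply Rmult_le_pos; lra). nra.
Qed.

Lemma pow2_lin (m : nat) : 1 + INR m <= 2 ^ m.
Proof.
  induction m as [|m IH]; [simpl; lra|]. rewrite S_INR. change (2 ^ S m) with (2 * 2 ^ m).
  pose proof (pos_INR m). lra.
Qed.

Definition lQ4 : list (R * nat * R) :=
  [(-2,0%nat,2); (1,1%nat,2); (4,0%nat,1); (2,1%nat,1); (-1,2%nat,1); (-2,0%nat,0); (-3,1%nat,0); (-1,2%nat,0)].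

Lemma Q4_nu n : 0 <= nu lQ4 n.
Proof.
  destruct n as [|[|[|m]]]; unfold lQ4; cbn -[INR]; try (simpl; lra).
  rewrite ?pow1, !S_INR. assert (H := pow2_ge m). assert (0 <= INR m) by apply pos_INR.
  destruct m as [|m]; [simpl in *; lra|]. rewrite S_INR, ?INR_0 in *. assert (0 <= INR m * (4*2^S m - INR m - 5)) by (apply Rmult_le_pos; [apply pos_INR| pose proof (pow2_lin (S m)) as HH; rewrite S_INR in HH; lra]). nra.
Qed.

Definition lQ3 : list (R * nat * R) :=
  [(10,0%nat,0); (9,1%nat,0); (2,2%nat,0); (-20,0%nat,1); (2,1%nat,1); (5,2%nat,1);
   (10,0%nat,2); (-11,1%nat,2); (3,2%nat,2)].

Lemma Q3_nu n : 0 <= nu lQ3 n.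
Proof.
  destruct n as [|[|[|[|[|[|[|m]]]]]]]; unfold lQ3; cbn -[INR]; try (simpl; lra).
  rewrite ?pow1, !S_INR, ?INR_0. assert (0 <= INR m) by apply pos_INR.
  assert (0 <= 2 ^ m) by (apply pow_le; lra). nra.
Qed.

Definition lS : list (R * nat * R) :=
  [(1,0%nat,2); (-1,0%nat,-2); (-2,0%nat,1); (2,0%nat,-1); (12,1%nat,0); (-6,1%nat,1);
   (-6,1%nat,-1); (3,2%nat,1); (-3,2%nat,-1); (-1,3%nat,1); (-1,3%nat,-1)].

Lemma pm2 p : (-2) ^ p = (-1) ^ p * 2 ^ p.
Proof. rewrite <- Rpow_mult_distr. f_equal. ring. Qed.

Lemma S_nu n : 0 <= nu lS n.
Proof.
  destruct n as [|[|[|[|m]]]]; unfold lS; cbn -[INR]; try (simpl; lra).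
  destruct (Nat.Even_or_Odd m) as [[k ->]|[k ->]].
  - rewrite pm2, pow_1_even, !pow1. lra.
  - rewrite Nat.add_1_r, pm2, pow_1_odd, !pow1.
    destruct k as [|[|k]]; [simpl; lra|simpl; lra|].
    assert (H := pow2_ge (S (2 * S (S k)))).
    rewrite !S_INR, ?INR_0 in *. rewrite mult_INR in *. rewrite !S_INR in *.
    assert (0 <= INR k) by apply pos_INR.
    set (p := 2 ^ S (2 * S (S k))) in *. set (y := INR k) in *. simpl in H. rewrite ?INR_0 in *.
    nra.
Qed.

Definition Nf g := exp g * (g - 1) + 1.
Definition Mf g := exp g - 1 - g.
Definition Kf g := exp g - 1.
Definition Gv g := g ^ 2 * exp g / Nf g.
Definition Phi4 g := Gv g - 2 - 2 * ln (Kf g) + ln 2 + ln (Nf g).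

Lemma e0 t : exp (0 * t) = 1. Proof. rewrite Rmult_0_l; apply exp_0. Qed.
Lemma e1 t : exp (1 * t) = exp t. Proof. rewrite Rmult_1_l; auto. Qed.
Lemma e2 t : exp (2 * t) = exp t * exp t. Proof. rewrite <- exp_plus; f_equal; ring. Qed.
Lemma em1 t : exp (-1 * t) = / exp t. Proof. rewrite <- exp_Ropp; f_equal; ring. Qed.
Lemma em2 t : exp (-2 * t) = / (exp t * exp t). Proof. rewrite <- exp_plus, <- exp_Ropp; f_equal; ring. Qed.
Ltac expn := rewrite ?e0, ?e1, ?e2, ?em1, ?em2.

Definition lN := [(1,1%nat,1); (-1,0%nat,1); (1,0%nat,0); (-1/2,2%nat,0)].
Lemma N_lb t : 0 <= t -> t ^ 2 / 2 <= Nf t.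
Proof.
  intros Ht. assert (H := ev_nonneg' lN t Ht).
  assert (0 <= ev lN t -> t ^ 2 / 2 <= Nf t).
  { unfold Nf; simpl; expn. intros; lra. }
  apply H0, H. intros n. destruct n as [|[|[|m]]]; unfold lN; cbn -[INR]; try (simpl; lra).
  rewrite ?pow1, !S_INR, ?INR_0. assert (0 <= INR m) by apply pos_INR. nra.
Qed.

Ltac coef_gen := rewrite ?pow1, ?S_INR, ?INR_0; repeat (rewrite S_INR); rewrite ?INR_0;
  assert (0 <= INR _) by apply pos_INR.

Definition lNu := [(1/2,2%nat,0); (1,3%nat,1); (-1,1%nat,1); (1,0%nat,1); (-1,0%nat,0)].
Lemma N_ub t : 0 <= t -> Nf t <= t ^ 2 / 2 + t ^ 3 * exp t.
Proof.
  intros Ht. assert (H := ev_nonneg' lNu t Ht).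
  assert (0 <= ev lNu t -> Nf t <= t ^ 2 / 2 + t ^ 3 * exp t).
  { unfold Nf; simpl; expn. intros; lra. }
  apply H0, H. intros n. destruct n as [|[|[|m]]]; unfold lNu; cbn -[INR]; try (simpl; lra).
  rewrite ?pow1, !S_INR, ?INR_0. assert (0 <= INR m) by apply pos_INR. nra.
Qed.

Definition lM := [(1,0%nat,1); (-1,0%nat,0); (-1,1%nat,0); (-1/2,2%nat,0)].
Lemma M_lb t : 0 <= t -> t ^ 2 / 2 <= Mf t.
Proof.
  intros Ht. assert (H := ev_nonneg' lM t Ht).
  assert (0 <= ev lM t -> t ^ 2 / 2 <= Mf t).
  { unfold Mf; simpl; expn. intros; lra. }
  apply H0, H. intros n. destruct n as [|[|[|m]]]; unfold lM; cbn -[INR]; try (simpl; lra).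
  rewrite ?pow1, !S_INR, ?INR_0. assert (0 <= INR m) by apply pos_INR. nra.
Qed.

Definition lMu := [(1/2,2%nat,0); (1,3%nat,1); (-1,0%nat,1); (1,0%nat,0); (1,1%nat,0)].
Lemma M_ub t : 0 <= t -> Mf t <= t ^ 2 / 2 + t ^ 3 * exp t.
Proof.
  intros Ht. assert (H := ev_nonneg' lMu t Ht).
  assert (0 <= ev lMu t -> Mf t <= t ^ 2 / 2 + t ^ 3 * exp t).
  { unfold Mf; simpl; expn. intros; lra. }
  apply H0, H. intros n. destruct n as [|[|[|m]]]; unfold lMu; cbn -[INR]; try (simpl; lra).
  rewrite ?pow1, !S_INR, ?INR_0. assert (0 <= INR m) by apply pos_INR. nra.
Qed.

Definition lKu := [(1,1%nat,1); (-1,0%nat,1); (1,0%nat,0)].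
Lemma K_ub t : 0 <= t -> Kf t <= t * exp t.
Proof.
  intros Ht. assert (H := ev_nonneg' lKu t Ht).
  assert (0 <= ev lKu t -> Kf t <= t * exp t).
  { unfold Kf; simpl; expn. intros; lra. }
  apply H0, H. intros n. destruct n as [|[|m]]; unfold lKu; cbn -[INR]; try (simpl; lra).
  rewrite ?pow1, !S_INR, ?INR_0. assert (0 <= INR m) by apply pos_INR. nra.
Qed.

Lemma K_lb t : 0 <= t -> t <= Kf t.
Proof. intros Ht. assert (H := M_lb t Ht). unfold Mf, Kf in *. nra. Qed.

Definition lA1 := [(1,1%nat,1); (-2,0%nat,1); (1,1%nat,0); (2,0%nat,0)].
Lemma A1_nn t : 0 <= t -> 0 <= exp t * (t - 2) + t + 2.
Proof.
  intros Ht. assert (H := ev_nonneg' lA1 t Ht).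
  assert (0 <= ev lA1 t -> 0 <= exp t * (t - 2) + t + 2).
  { simpl; expn. intros; lra. }
  apply H0, H. intros n. destruct n as [|[|m]]; unfold lA1; cbn -[INR]; try (simpl; lra).
  rewrite ?pow1, !S_INR, ?INR_0. assert (0 <= INR m) by apply pos_INR. nra.
Qed.

Lemma K_pos t : 0 < t -> 0 < Kf t.
Proof. intros; pose proof (K_lb t); lra. Qed.
Lemma N_pos t : 0 < t -> 0 < Nf t.
Proof. intros; pose proof (N_lb t); assert (0 < t^2) by (apply pow_lt; lra). lra. Qed.
Lemma M_pos t : 0 < t -> 0 < Mf t.
Proof. intros; pose proof (M_lb t); assert (0 < t^2) by (apply pow_lt; lra). lra. Qed.

Lemma Phi4_der t : 0 < t -> is_derive Phi4 t (exp t * ev lQ4 t / (Nf t ^ 2 * Kf t)).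
Proof.
  intros Ht. pose proof (K_pos t Ht). pose proof (N_pos t Ht).
  unfold Phi4, Gv. unfold Kf, Nf in *. auto_derive.
  - repeat split; try lra.
  - simpl. expn. field. repeat split; lra.
Qed.

Lemma mono_right (f df : R -> R) (C b : R) : 0 < b -> 0 <= C ->
  (forall t, 0 < t -> is_derive f t (df t)) ->
  (forall t, 0 < t -> 0 <= df t) ->
  (forall t, 0 < t < 1 -> - C * t <= f t) ->
  0 <= f b.
Proof.
  intros Hb HC Hd Hdf Hl.
  destruct (Rle_lt_dec 0 (f b)) as [H|H]; [exact H|exfalso].
  set (t := Rmin (Rmin (b/2) (1/2)) ((- f b) / (2 * (C + 1)))).
  assert (Ht1 : 0 < t).
  { unfold t. repeat apply Rmin_glb_lt; try lra. apply Rdiv_lt_0_compat; lra. }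
  assert (Ht2 : t <= b/2) by (unfold t; eapply Rle_trans; [apply Rmin_l|apply Rmin_l]).
  assert (Ht3 : t <= 1/2) by (unfold t; eapply Rle_trans; [apply Rmin_l|apply Rmin_r]).
  assert (Ht4 : t <= (- f b) / (2 * (C + 1))) by (unfold t; apply Rmin_r).
  assert (Hft : - C * t <= f t) by (apply Hl; lra).
  assert (HCt : C * t <= (- f b) / 2).
  { apply Rle_trans with ((C + 1) * t); [nra|].
    apply Rmult_le_compat_l with (r := C + 1) in Ht4; [|lra].
    replace ((C + 1) * (- f b / (2 * (C + 1)))) with (- f b / 2) in Ht4 by (field; lra). lra. }
  destruct (MVT_gen f t b df) as [c [Hc Heq]].
  - intros x Hx. apply Hd. rewrite Rmin_left in Hx by lra. lra.
  - intros x Hx. rewrite Rmin_left in Hx by lra. rewrite Rmax_right in Hx by lra.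
    apply continuity_pt_filterlim. apply (ex_derive_continuous f). exists (df x). apply Hd. lra.
  - rewrite Rmin_left in Hc by lra. rewrite Rmax_right in Hc by lra.
    assert (0 <= df c) by (apply Hdf; lra).
    assert (0 <= df c * (b - t)) by (apply Rmult_le_pos; lra). lra.
Qed.

Lemma ln_le' x y : 0 < x -> x <= y -> ln x <= ln y.
Proof. intros Hx Hxy. destruct (Req_dec x y) as [->|Hne]; [lra|]. left; apply ln_increasing; lra. Qed.
Lemma ln_sub1 y : 0 < y -> ln y <= y - 1.
Proof. intros Hy. pose proof (exp_ineq1_le (ln y)). rewrite exp_ln in H by lra. lra. Qed.
Lemma exp_le3 t : t <= 1 -> exp t <= 3.
Proof. intros Ht. pose proof exp_le_3. destruct (Req_dec t 1) as [->|]; [lra|].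
  pose proof (exp_increasing t 1 ltac:(lra)). lra. Qed.
Lemma exp_ge1 t : 0 <= t -> 1 <= exp t.
Proof. intros. pose proof (exp_ineq1_le t). lra. Qed.

Definition lKu2 := [(1,1%nat,0); (1,2%nat,1); (-1,0%nat,1); (1,0%nat,0)].
Lemma K_ub2 t : 0 <= t -> Kf t <= t + t ^ 2 * exp t.
Proof.
  intros Ht. assert (H := ev_nonneg' lKu2 t Ht).
  assert (0 <= ev lKu2 t -> Kf t <= t + t ^ 2 * exp t).
  { unfold Kf; simpl; expn. intros; lra. }
  apply H0, H. intros n. destruct n as [|[|[|m]]]; unfold lKu2; cbn -[INR]; try (simpl; lra).
  rewrite ?pow1, !S_INR, ?INR_0. assert (0 <= INR m) by apply pos_INR. nra.
Qed.

Lemma lnKN_ub t : 0 < t < 1 -> 2 * ln (Kf t) - ln 2 - ln (Nf t) <= 6 * t.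
Proof.
  intros Ht. pose proof (K_pos t ltac:(lra)). pose proof (N_pos t ltac:(lra)).
  pose proof (K_ub2 t ltac:(lra)). pose proof (N_lb t ltac:(lra)). pose proof (exp_le3 t ltac:(lra)).
  assert (HK : Kf t <= t * (1 + 3 * t)) by nra.
  assert (h1 : ln (Kf t) <= ln t + ln (1 + 3 * t)).
  { rewrite <- ln_mult by lra. apply ln_le'; lra. }
  assert (h2 : ln (t ^ 2 / 2) <= ln (Nf t)) by (apply ln_le'; [assert (0<t^2) by (apply pow_lt; lra); lra|lra]).
  unfold Rdiv in h2. rewrite ln_mult, ln_Rinv, ln_pow in h2 by (try apply pow_lt; lra).
  pose proof (ln_sub1 (1 + 3 * t) ltac:(lra)). simpl INR in h2. lra.
Qed.

Lemma Phi4_lb t : 0 < t < 1 -> - 30 * t <= Phi4 t.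
Proof.
  intros Ht. pose proof (lnKN_ub t Ht). pose proof (N_pos t ltac:(lra)).
  pose proof (N_ub t ltac:(lra)). pose proof (exp_le3 t ltac:(lra)). pose proof (exp_ge1 t ltac:(lra)).
  assert (HG : 2 - 12 * t <= Gv t).
  { unfold Gv. apply Rle_trans with (t ^ 2 / Nf t).
    - apply Rmult_le_reg_r with (Nf t); [lra|]. unfold Rdiv. rewrite Rmult_assoc, Rinv_l, Rmult_1_r by lra.
      assert (Nf t <= t ^ 2 / 2 + 3 * t ^ 3) by (assert (0 <= t^3) by (apply pow_le; lra); nra).
      simpl in *. nra.
    - unfold Rdiv. apply Rmult_le_compat_r; [left; apply Rinv_0_lt_compat; lra|].
      assert (0 <= t^2) by (apply pow_le; lra). nra. }
  unfold Phi4. lra.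
Qed.

Lemma Phi4_nn b : 0 < b -> 0 <= Phi4 b.
Proof.
  intros Hb. apply (mono_right Phi4 (fun t => exp t * ev lQ4 t / (Nf t ^ 2 * Kf t)) 30 b Hb); [lra| | |].
  - intros t Ht. apply Phi4_der, Ht.
  - intros t Ht. pose proof (K_pos t Ht). pose proof (N_pos t Ht).
    apply Rdiv_le_0_compat.
    + apply Rmult_le_pos; [apply Rlt_le, exp_pos| apply ev_nonneg'; [lra|apply Q4_nu]].
    + apply Rmult_lt_0_compat; [apply pow_lt|]; lra.
  - intros t Ht. apply Phi4_lb; lra.
Qed.

Definition Phi3n g := 2 - Gv g + 5 / 2 * (2 * ln (Kf g) - ln 2 - ln (Nf g)).

Lemma Phi3n_der t : 0 < t -> is_derive Phi3n t (exp t * ev lQ3 t / (2 * Nf t ^ 2 * Kf t)).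
Proof.
  intros Ht. pose proof (K_pos t Ht). pose proof (N_pos t Ht).
  unfold Phi3n, Gv. unfold Kf, Nf in *. auto_derive.
  - repeat split; try lra.
  - simpl. expn. field. repeat split; lra.
Qed.

Lemma lnKN_lb t : 0 < t < 1 -> - 6 * t <= 2 * ln (Kf t) - ln 2 - ln (Nf t).
Proof.
  intros Ht. pose proof (K_pos t ltac:(lra)). pose proof (N_pos t ltac:(lra)).
  pose proof (K_lb t ltac:(lra)). pose proof (N_ub t ltac:(lra)). pose proof (exp_le3 t ltac:(lra)).
  assert (HN : Nf t <= t ^ 2 / 2 * (1 + 6 * t)) by (assert (0 <= t^3) by (apply pow_le; lra); simpl in *; nra).
  assert (h1 : ln t <= ln (Kf t)) by (apply ln_le'; lra).
  assert (h2 : ln (Nf t) <= ln (t ^ 2 / 2 * (1 + 6 * t))) by (apply ln_le'; lra).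
  unfold Rdiv in h2. rewrite !ln_mult, ln_Rinv, ln_pow in h2 by (try apply Rmult_lt_0_compat; try apply pow_lt; try apply Rinv_0_lt_compat; lra).
  pose proof (ln_sub1 (1 + 6 * t) ltac:(lra)). simpl INR in h2. lra.
Qed.

Lemma Phi3n_lb t : 0 < t < 1 -> - 30 * t <= Phi3n t.
Proof.
  intros Ht. pose proof (lnKN_lb t Ht). pose proof (N_pos t ltac:(lra)).
  pose proof (N_lb t ltac:(lra)). pose proof (exp_le3 t ltac:(lra)).
  pose proof (K_ub2 t ltac:(lra)) as HK. unfold Kf in HK.
  assert (HG : Gv t <= 2 + 8 * t).
  { unfold Gv. apply Rmult_le_reg_r with (Nf t); [lra|]. unfold Rdiv. rewrite Rmult_assoc, Rinv_l, Rmult_1_r by lra.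
    assert (0 <= t^2) by (apply pow_le; lra). assert (exp t <= 1 + 4 * t) by nra. assert (0 <= (2 + 8*t) * (Nf t - t^2/2)) by (apply Rmult_le_pos; lra). assert (0 <= t^2 * (1 + 4*t - exp t)) by (apply Rmult_le_pos; lra). nra. }
  unfold Phi3n. lra.
Qed.

Lemma Phi3n_nn b : 0 < b -> 0 <= Phi3n b.
Proof.
  intros Hb. apply (mono_right Phi3n (fun t => exp t * ev lQ3 t / (2 * Nf t ^ 2 * Kf t)) 30 b Hb); [lra| | |].
  - intros t Ht. apply Phi3n_der, Ht.
  - intros t Ht. pose proof (K_pos t Ht). pose proof (N_pos t Ht).
    apply Rdiv_le_0_compat.
    + apply Rmult_le_pos; [apply Rlt_le, exp_pos| apply ev_nonneg'; [lra|apply Q3_nu]].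
    + apply Rmult_lt_0_compat; [apply Rmult_lt_0_compat; [lra|apply pow_lt]|]; lra.
  - intros t Ht. apply Phi3n_lb; lra.
Qed.

Definition Phi2 g := g ^ 2 * Kf g ^ 2 / (Nf g * Mf g) - 4 + ln 4 + ln (Nf g) + g + ln (Mf g) - 4 * ln (Kf g).

Lemma Phi2_der t : 0 < t -> is_derive Phi2 t
  ((exp t * (t - 2) + t + 2) * (exp t * exp t * ev lS t) / (Nf t ^ 2 * Mf t ^ 2 * Kf t)).
Proof.
  intros Ht. pose proof (K_pos t Ht). pose proof (N_pos t Ht). pose proof (M_pos t Ht).
  unfold Phi2. unfold Kf, Nf, Mf in *. auto_derive.
  - repeat split; try lra; apply Rmult_integral_contrapositive; split; lra.
  - unfold lS; simpl. expn. field; repeat split; try lra; apply Rgt_not_eq, exp_pos.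
Qed.

Lemma ln_t2 t : 0 < t -> ln (t ^ 2 / 2) = 2 * ln t - ln 2.
Proof. intros Ht. unfold Rdiv. rewrite ln_mult, ln_Rinv, ln_pow by (try apply pow_lt; try apply Rinv_0_lt_compat; lra). simpl. ring. Qed.

Lemma Phi2_lb t : 0 < t < 1 -> - 100 * t <= Phi2 t.
Proof.
  intros Ht. pose proof (K_pos t ltac:(lra)). pose proof (N_pos t ltac:(lra)). pose proof (M_pos t ltac:(lra)).
  pose proof (N_lb t ltac:(lra)). pose proof (M_lb t ltac:(lra)).
  pose proof (N_ub t ltac:(lra)). pose proof (M_ub t ltac:(lra)).
  pose proof (K_lb t ltac:(lra)). pose proof (K_ub2 t ltac:(lra)). pose proof (exp_le3 t ltac:(lra)).
  assert (Ht2 : 0 < t ^ 2) by (apply pow_lt; lra).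
  assert (Ht3 : 0 <= t ^ 3) by (apply pow_le; lra).
  assert (HN : Nf t <= t ^ 2 / 2 * (1 + 6 * t)) by (simpl in *; nra).
  assert (HM : Mf t <= t ^ 2 / 2 * (1 + 6 * t)) by (simpl in *; nra).
  assert (HK : Kf t <= t * (1 + 3 * t)) by (simpl in *; nra).
  assert (HH1 : 4 - 48 * t <= t ^ 2 * Kf t ^ 2 / (Nf t * Mf t)).
  { apply Rmult_le_reg_r with (Nf t * Mf t); [apply Rmult_lt_0_compat; lra|].
    unfold Rdiv. rewrite Rmult_assoc, Rinv_l, Rmult_1_r by (apply Rgt_not_eq, Rmult_lt_0_compat; lra).
    assert (HNM : Nf t * Mf t <= (t ^ 2 / 2 * (1 + 6 * t)) ^ 2) by (simpl; apply Rmult_le_compat; lra).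
    assert (HKK : t ^ 2 <= Kf t ^ 2) by (simpl; apply Rmult_le_compat; lra).
    destruct (Rle_lt_dec (4 - 48 * t) 0) as [Hn|Hp].
    - assert (0 <= t ^ 2 * Kf t ^ 2) by (apply Rmult_le_pos; [lra|apply pow_le; lra]).
      assert (0 <= Nf t * Mf t) by (apply Rmult_le_pos; lra). nra.
    - apply Rle_trans with ((4 - 48 * t) * (t ^ 2 / 2 * (1 + 6 * t)) ^ 2).
      + apply Rmult_le_compat_l; lra.
      + apply Rle_trans with (t ^ 2 * t ^ 2); [|apply Rmult_le_compat_l; lra].
        replace ((4 - 48 * t) * (t ^ 2 / 2 * (1 + 6 * t)) ^ 2) with (t^2 * t^2 * ((1 - 12 * t) * (1 + 6*t)^2)) by (simpl; field).
        assert (0 <= t^2 * t^2) by nra.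
        assert ((1 - 12 * t) * (1 + 6*t)^2 <= 1) by (simpl; nra). nra. }
  assert (h1 : ln (t ^ 2 / 2) <= ln (Nf t)) by (apply ln_le'; lra).
  assert (h2 : ln (t ^ 2 / 2) <= ln (Mf t)) by (apply ln_le'; lra).
  assert (h3 : ln (Kf t) <= ln (t * (1 + 3 * t))) by (apply ln_le'; lra).
  rewrite ln_mult in h3 by lra. rewrite ln_t2 in h1, h2 by lra.
  pose proof (ln_sub1 (1 + 3 * t) ltac:(lra)).
  assert (h4 : ln 4 = 2 * ln 2) by (replace 4 with (2 * 2) by ring; rewrite ln_mult by lra; ring).
  unfold Phi2. lra.
Qed.

Lemma Phi2_nn b : 0 < b -> 0 <= Phi2 b.
Proof.
  intros Hb. apply (mono_right Phi2 (fun t => (exp t * (t - 2) + t + 2) * (exp t * exp t * ev lS t) / (Nf t ^ 2 * Mf t ^ 2 * Kf t)) 100 b Hb); [lra| | |].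
  - intros t Ht. apply Phi2_der, Ht.
  - intros t Ht. pose proof (K_pos t Ht). pose proof (N_pos t Ht). pose proof (M_pos t Ht).
    apply Rdiv_le_0_compat.
    + apply Rmult_le_pos; [apply A1_nn; lra|].
      apply Rmult_le_pos; [apply Rmult_le_pos; apply Rlt_le, exp_pos| apply ev_nonneg'; [lra|apply S_nu]].
    + repeat apply Rmult_lt_0_compat; try apply pow_lt; lra.
  - intros t Ht. apply Phi2_lb; lra.
Qed.

Lemma phi_eq g : phi g = Nf g / Kf g ^ 2.
Proof. reflexivity. Qed.

Lemma phi_cont t : 0 < t -> continuity_pt phi t.
Proof.
  intros Ht. pose proof (K_pos t Ht). unfold Kf in *.
  apply continuity_pt_filterlim. apply (ex_derive_continuous phi).
  unfold phi. auto_derive. apply Rgt_not_eq. apply Rmult_lt_0_compat; lra.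
Qed.

Lemma phi_small g : 0 < g <= 1 -> 1/2 - 3 * g <= phi g.
Proof.
  intros Hg. rewrite phi_eq. pose proof (K_pos g ltac:(lra)).
  pose proof (N_lb g ltac:(lra)). pose proof (K_ub2 g ltac:(lra)). pose proof (exp_le3 g ltac:(lra)).
  assert (HK : Kf g <= g * (1 + 3 * g)) by (simpl in *; nra).
  assert (0 < Kf g ^ 2) by (apply pow_lt; lra).
  apply Rmult_le_reg_r with (Kf g ^ 2); [lra|]. unfold Rdiv. rewrite Rmult_assoc, Rinv_l, Rmult_1_r by lra.
  destruct (Rle_lt_dec (1/2 - 3 * g) 0) as [Hn|Hp].
  - assert (0 <= Nf g) by (assert (0 <= g^2) by (apply pow_le; lra); lra). nra.
  - apply Rle_trans with ((1/2 - 3 * g) * (g * (1 + 3 * g)) ^ 2).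
    + apply Rmult_le_compat_l; [lra|]. simpl. apply Rmult_le_compat; lra.
    + replace ((1/2 - 3 * g) * (g * (1 + 3 * g)) ^ 2) with (g^2/2 * ((1 - 6*g) * (1 + 3*g)^2)) by (simpl; field).
      assert (0 <= g^2/2) by (assert (0 <= g^2) by (apply pow_le; lra); lra).
      assert ((1 - 6*g) * (1 + 3*g)^2 <= 1) by (simpl; nra). nra.
Qed.

Lemma phi_large g : 1 <= g -> phi g <= 8 / g.
Proof.
  intros Hg. rewrite phi_eq. pose proof (M_lb g ltac:(lra)). unfold Mf, Kf, Nf in *.
  assert (HE : 0 < exp g) by apply exp_pos.
  assert (HK : exp g / 2 <= exp g - 1) by (simpl in *; nra).
  assert (HK2 : (exp g / 2) ^ 2 <= (exp g - 1) ^ 2) by (simpl; apply Rmult_le_compat; lra).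
  assert (HN : exp g * (g - 1) + 1 <= g * exp g) by (pose proof (exp_ge1 g); nra).
  assert (HN0 : 0 <= exp g * (g - 1) + 1) by nra.
  assert (0 < (exp g / 2) ^ 2) by (apply pow_lt; lra).
  apply Rle_trans with (g * exp g / (exp g / 2) ^ 2).
  - unfold Rdiv. apply Rmult_le_compat; try lra.
    + left; apply Rinv_0_lt_compat; lra.
    + apply Rinv_le_contravar; lra.
  - replace (g * exp g / (exp g / 2) ^ 2) with (4 * g / exp g) by (simpl; field; lra).
    apply Rmult_le_reg_r with (exp g * g); [nra|].
    replace (4 * g / exp g * (exp g * g)) with (4 * g * g) by (field; lra).
    replace (8 / g * (exp g * g)) with (8 * exp g) by (field; lra). simpl in *. nra.
Qed.

Lemma gamma_exists x : 0 < x < 1/2 -> exists g, 0 < g /\ x = phi g.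
Proof.
  intros Hx.
  set (g0 := Rmin 1 ((1/2 - x) / 6)). set (g1 := 1 + 8 / x).
  assert (Hg0 : 0 < g0 <= 1).
  { unfold g0. split; [apply Rmin_glb_lt; lra|apply Rmin_l]. }
  assert (Hg0' : g0 <= (1/2 - x) / 6) by apply Rmin_r.
  assert (H8 : 0 < 8 / x) by (apply Rdiv_lt_0_compat; lra).
  assert (Hg1 : 1 < g1) by (unfold g1; lra).
  assert (Hp0 : x < phi g0) by (pose proof (phi_small g0 Hg0); lra).
  assert (Hp1 : phi g1 < x).
  { pose proof (phi_large g1 ltac:(lra)).
    assert (8 / g1 < x).
    { apply Rmult_lt_reg_r with g1; [lra|]. unfold Rdiv. rewrite Rmult_assoc, Rinv_l, Rmult_1_r by lra.
      unfold g1. replace (x * (1 + 8 / x)) with (x + 8) by (field; lra). lra. }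
    lra. }
  destruct (Ranalysis5.IVT_interv (fun g => x - phi g) g0 g1) as [z [Hz Hfz]].
  - intros a Ha. apply continuity_pt_minus; [apply continuity_pt_const; intros ? ?; reflexivity|].
    apply phi_cont. lra.
  - lra.
  - lra.
  - lra.
  - exists z. split; lra.
Qed.

Lemma gamma_spec x : 0 < x < 1/2 -> 0 < gamma_of x /\ x = phi (gamma_of x).
Proof.
  intros Hx. unfold gamma_of. apply epsilon_spec. apply gamma_exists, Hx.
Qed.

Lemma G_eq x : 0 < x < 1/2 -> G (1 / x) = Gv (gamma_of x).
Proof.
  intros Hx. unfold G. destruct (Req_EM_T (1 / x) 2) as [He|Hne].
  - exfalso. assert (1 / x > 2).
    { apply Rmult_lt_reg_r with x; [lra|]. unfold Rdiv. rewrite Rmult_assoc, Rinv_l by lra. lra. }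
    lra.
  - replace (1 / (1 / x)) with x by (field; lra). reflexivity.
Qed.

Lemma ln_inv1 y : 0 < y -> ln (1 / y) = - ln y.
Proof. intros. unfold Rdiv. rewrite Rmult_1_l, ln_Rinv; auto. Qed.

Lemma ln2_ub : ln 2 <= 4 / 5.
Proof.
  pose proof (M_lb (4/5) ltac:(lra)). unfold Mf in H.
  rewrite <- (ln_exp (4/5)). apply ln_le'; [lra|]. simpl in H. lra.
Qed.

Lemma ln2_pos : 0 < ln 2.
Proof. rewrite <- ln_1. apply ln_increasing; lra. Qed.

Lemma key x : 0 < x < 1/2 ->
     4 * x * (1 - x) * log2 (1 / (x * (1 - x))) >= x * G (1 / x) /\
     x * G (1 / x) >= x * (1 - x) * (4 + ln (1 / (4 * x * (1 - x)))) /\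
     2 * x * log2 (1 / x) >= x * G (1 / x) /\
     x * G (1 / x) >= x * (2 + ln (1 / (2 * x))).
Proof.
  intros Hx. rewrite (G_eq x Hx). destruct (gamma_spec x Hx) as [Hg Hxg].
  set (g := gamma_of x) in *.
  pose proof (K_pos g Hg) as HK. pose proof (N_pos g Hg) as HN. pose proof (M_pos g Hg) as HM.
  pose proof (exp_pos g) as HE.
  assert (H1x : 1 - x = exp g * Mf g / Kf g ^ 2).
  { rewrite Hxg, phi_eq. unfold Nf, Mf, Kf in *. field. lra. }
  assert (Hlx : ln x = ln (Nf g) - 2 * ln (Kf g)).
  { rewrite Hxg, phi_eq. unfold Rdiv. rewrite ln_mult, ln_Rinv, ln_pow by (try apply Rinv_0_lt_compat; try apply pow_lt; lra). simpl. ring. }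
  assert (Hl1x : ln (1 - x) = g + ln (Mf g) - 2 * ln (Kf g)).
  { rewrite H1x. unfold Rdiv. rewrite !ln_mult, ln_Rinv, ln_pow, ln_exp by (try apply Rmult_lt_0_compat; try apply Rinv_0_lt_compat; try apply pow_lt; lra). simpl. ring. }
  assert (HGT : Gv g = (1 - x) * (g ^ 2 * Kf g ^ 2 / (Nf g * Mf g))).
  { rewrite H1x. unfold Gv. field. repeat split; lra. }
  pose proof (Phi4_nn g Hg) as P4. pose proof (Phi3n_nn g Hg) as P3. pose proof (Phi2_nn g Hg) as P2.
  unfold Phi4, Phi3n, Phi2 in *.
  pose proof ln2_ub. pose proof ln2_pos.
  assert (Hln2x : ln (2 * x) < 0) by (rewrite <- ln_1; apply ln_increasing; lra).
  rewrite ln_mult in Hln2x by lra.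
  assert (Hln1x : ln (1 - x) < 0) by (rewrite <- ln_1; apply ln_increasing; lra).
  assert (Hlnx : ln x < 0) by (rewrite <- ln_1; apply ln_increasing; lra).
  assert (h4 : ln 4 = 2 * ln 2) by (replace 4 with (2 * 2) by ring; rewrite ln_mult by lra; ring).
  assert (Hu : 0 < x * (1 - x)) by nra.
  unfold log2. rewrite !ln_inv1 by (try apply Rmult_lt_0_compat; try apply Rmult_lt_0_compat; lra).
  rewrite (ln_mult 2 x) by lra. rewrite (ln_mult (x) (1 - x)) by lra.
  rewrite (ln_mult (4 * x) (1 - x)) by lra. rewrite (ln_mult 4 x) by lra.
  set (a := - ln x). set (b := - ln (1 - x)). set (l := ln 2).
  assert (HG4 : 2 + (a - l) <= Gv g) by (unfold a, l; lra).
  assert (HG3 : Gv g <= 2 + 5 / 2 * (a - l)) by (unfold a, l; lra).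
  assert (Hal : 0 <= a - l) by (unfold a, l; lra).
  assert (Hb : 0 <= b) by (unfold b; lra).
  assert (Hl1 : l <= 4/5) by (unfold l; lra). assert (Hl0 : 0 < l) by (unfold l; lra).
  assert (H3 : l * Gv g <= 2 * a).
  { apply Rle_trans with (l * (2 + 5 / 2 * (a - l))); [apply Rmult_le_compat_l; lra|].
    assert (0 <= (2 - 5/2 * l) * (a - l)) by (apply Rmult_le_pos; lra). nra. }
  assert (H3' : Gv g <= 2 * a / l).
  { apply Rmult_le_reg_l with l; [lra|]. replace (l * (2 * a / l)) with (2 * a) by (field; lra). lra. }
  assert (H1 : 2 * x * a <= 4 * x * (1 - x) * (a + b)) by (assert (0 <= x * ((1 - 2*x) * a)) by (apply Rmult_le_pos; [lra|apply Rmult_le_pos; lra]); assert (0 <= x * ((1 - x) * b)) by (apply Rmult_le_pos; [lra|apply Rmult_le_pos; lra]); nra).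
  repeat split.
  - apply Rle_ge. unfold Rdiv.
    replace (4 * x * (1 - x) * (- (ln x + ln (1 - x)) * / l)) with (4 * x * (1 - x) * (a + b) / l) by (unfold a, b; field; lra).
    apply Rle_trans with (2 * x * a / l).
    + replace (2 * x * a / l) with (x * (2 * a / l)) by (field; lra). apply Rmult_le_compat_l; lra.
    + unfold Rdiv. apply Rmult_le_compat_r; [left; apply Rinv_0_lt_compat; lra|lra].
  - apply Rle_ge. rewrite HGT.
    replace (x * ((1 - x) * (g ^ 2 * Kf g ^ 2 / (Nf g * Mf g)))) with (x * (1 - x) * (g ^ 2 * Kf g ^ 2 / (Nf g * Mf g))) by ring.
    apply Rmult_le_compat_l; [lra|]. rewrite Hlx, Hl1x, h4. lra.
  - apply Rle_ge. unfold Rdiv.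
    replace (2 * x * (a * / l)) with (x * (2 * a / l)) by (field; lra).
    apply Rmult_le_compat_l; lra.
  - apply Rle_ge. apply Rmult_le_compat_l; [lra|]. unfold a in HG4. lra.
Qed.

Lemma ln_le_2sqrt g : 0 < g -> ln g <= 2 * sqrt g.
Proof.
  intros Hg. assert (Hs : 0 < sqrt g) by (apply sqrt_lt_R0; lra).
  rewrite <- (sqrt_sqrt g) at 1 by lra. rewrite ln_mult by lra.
  pose proof (ln_sub1 (sqrt g) Hs). lra.
Qed.

Lemma upper_aux g e : 0 < e -> (5 * (1 + e) / e + 2) ^ 2 < g ->
  Gv g <= (1 + e) * (2 * ln (Kf g) - ln (Nf g)).
Proof.
  intros He Hg.
  set (S := 5 * (1 + e) / e + 2) in *.
  assert (HS : 5 * (1 + e) / e + 2 = S) by reflexivity.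
  assert (HS5 : 5 * (1 + e) <= e * (S - 2)) by (unfold S; replace (e * (5 * (1 + e) / e + 2 - 2)) with (5 * (1 + e)) by (field; lra); lra).
  assert (HS7 : 7 <= S) by (unfold S; assert (5 * (1+e) / e > 5) by (apply Rmult_lt_reg_r with e; [lra|]; unfold Rdiv; rewrite Rmult_assoc, Rinv_l by lra; lra); lra).
  assert (Hg1 : 49 < g) by (simpl in Hg; nra).
  set (s := sqrt g).
  assert (Hss : s * s = g) by (apply sqrt_sqrt; lra).
  assert (Hs0 : 0 < s) by (apply sqrt_lt_R0; lra).
  assert (HsS : S < s) by (destruct (Rle_lt_dec s S); [|lra]; simpl in Hg; nra).
  pose proof (ln_le_2sqrt g ltac:(lra)) as Hlng. fold s in Hlng.
  pose proof (exp_pos g) as HE. pose proof (M_lb g ltac:(lra)) as HM. unfold Mf in HM.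
  assert (HE2 : 2 <= exp g) by (simpl in HM; nra).
  pose proof (K_pos g ltac:(lra)) as HK. pose proof (N_pos g ltac:(lra)) as HN.
  assert (HKl : exp g / 2 <= Kf g) by (unfold Kf; lra).
  assert (HNu : Nf g <= g * exp g) by (unfold Nf; lra).
  assert (HNl : exp g * (g - 1) <= Nf g) by (unfold Nf; lra).
  assert (HA : g - 2 * ln 2 - ln g <= 2 * ln (Kf g) - ln (Nf g)).
  { assert (h1 : ln (exp g / 2) <= ln (Kf g)) by (apply ln_le'; lra).
    assert (h2 : ln (Nf g) <= ln (g * exp g)) by (apply ln_le'; lra).
    unfold Rdiv in h1. rewrite ln_mult, ln_Rinv, ln_exp in h1 by (try apply Rinv_0_lt_compat; lra).
    rewrite ln_mult, ln_exp in h2 by lra. lra. }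
  pose proof ln2_ub.
  assert (HA2 : s * s - 2 * s - 2 <= 2 * ln (Kf g) - ln (Nf g)) by lra.
  assert (HG : Gv g <= g * g / (g - 1)).
  { unfold Gv. apply Rmult_le_reg_r with (Nf g * (g - 1)); [apply Rmult_lt_0_compat; lra|].
    replace (g ^ 2 * exp g / Nf g * (Nf g * (g - 1))) with (g * g * (exp g * (g - 1))) by (simpl; field; lra).
    replace (g * g / (g - 1) * (Nf g * (g - 1))) with (g * g * Nf g) by (field; lra).
    apply Rmult_le_compat_l; [nra|lra]. }
  apply Rle_trans with (g * g / (g - 1)); [exact HG|].
  apply Rle_trans with ((1 + e) * (s * s - 2 * s - 2)); [|apply Rmult_le_compat_l; lra].
  rewrite <- Hss.
  apply Rmult_le_reg_r with (s * s - 1); [nra|].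
  replace (s * s * (s * s) / (s * s - 1) * (s * s - 1)) with (s * s * (s * s)) by (field; nra).
  (* s^4 <= (1+e)(s^2-2s-2)(s^2-1) *)
  assert (Hkey : 5 * (1 + e) * (s * s * s) <= e * (s * s * s * s)).
  { assert (0 < s * s * s) by (repeat apply Rmult_lt_0_compat; lra).
    assert (5 * (1 + e) <= e * s) by nra. nra. }
  assert (Hp : (1 + e) * (s * s * s * s - 5 * (s * s * s)) <= (1 + e) * (s * s - 2 * s - 2) * (s * s - 1)).
  { replace ((1 + e) * (s * s - 2 * s - 2) * (s * s - 1)) with ((1 + e) * (s * s * s * s - 2 * (s * s * s) - 3 * (s * s) + 2 * s + 2)) by ring.
    apply Rmult_le_compat_l; [lra|]. assert (s * s <= s * s * s) by nra. nra. }
  nra.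
Qed.

Lemma phi_lb g : 0 < g -> / (2 * exp g ^ 2) <= phi g.
Proof.
  intros Hg. rewrite phi_eq. pose proof (K_pos g Hg). pose proof (N_lb g ltac:(lra)).
  pose proof (K_ub g ltac:(lra)). pose proof (exp_pos g).
  assert (0 < Kf g ^ 2) by (apply pow_lt; lra).
  apply Rmult_le_reg_r with (2 * exp g ^ 2 * Kf g ^ 2); [repeat apply Rmult_lt_0_compat; try apply pow_lt; lra|].
  replace (/ (2 * exp g ^ 2) * (2 * exp g ^ 2 * Kf g ^ 2)) with (Kf g ^ 2) by (field; lra).
  replace (Nf g / Kf g ^ 2 * (2 * exp g ^ 2 * Kf g ^ 2)) with (2 * exp g ^ 2 * Nf g) by (field; lra).
  assert (Kf g ^ 2 <= (g * exp g) ^ 2) by (simpl; apply Rmult_le_compat; lra).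
  assert ((g * exp g) ^ 2 = exp g ^ 2 * g ^ 2) by ring.
  assert (0 <= exp g ^ 2) by (apply pow_le; lra). nra.
Qed.

Lemma limit_part : filterlim (fun x => G (1 / x) / ln (1 / x)) (at_right 0) (locally 1).
Proof.
  apply filterlim_locally. intros eps.
  set (e := pos eps / 2). assert (He : 0 < e) by (unfold e; destruct eps; simpl; lra).
  set (gs := (5 * (1 + e) / e + 2) ^ 2).
  assert (Hgs : 0 < gs) by (unfold gs; apply pow_lt; assert (0 < 5 * (1 + e) / e) by (apply Rdiv_lt_0_compat; lra); lra).
  set (d := Rmin (1/4) (/ (2 * exp gs ^ 2))).
  assert (Hd : 0 < d) by (unfold d; apply Rmin_glb_lt; [lra|apply Rinv_0_lt_compat; apply Rmult_lt_0_compat; [lra|apply pow_lt, exp_pos]]).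
  exists (mkposreal d Hd). intros x Hxb Hx0. simpl in Hxb.
  unfold ball in Hxb; simpl in Hxb; unfold AbsRing_ball, abs, minus, plus, opp in Hxb; simpl in Hxb.
  rewrite Ropp_0, Rplus_0_r, Rabs_pos_eq in Hxb by lra.
  assert (Hx : 0 < x < 1/2) by (split; [lra|]; assert (d <= 1/4) by apply Rmin_l; lra).
  assert (Hxd : x < / (2 * exp gs ^ 2)) by (assert (d <= / (2 * exp gs ^ 2)) by apply Rmin_r; lra).
  rewrite (G_eq x Hx). destruct (gamma_spec x Hx) as [Hg Hxg]. set (g := gamma_of x) in *.
  assert (Hggs : gs < g).
  { destruct (Rle_lt_dec g gs) as [Hle|]; [exfalso|lra].
    pose proof (phi_lb g Hg). rewrite <- Hxg in H.
    assert (exp g ^ 2 <= exp gs ^ 2).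
    { assert (exp g <= exp gs) by (destruct (Req_dec g gs) as [->|]; [lra|left; apply exp_increasing; lra]).
      pose proof (exp_pos g). simpl. apply Rmult_le_compat; lra. }
    assert (/ (2 * exp gs ^ 2) <= / (2 * exp g ^ 2)).
    { apply Rinv_le_contravar; [apply Rmult_lt_0_compat; [lra|apply pow_lt, exp_pos]|lra]. }
    lra. }
  pose proof (upper_aux g e He Hggs) as Hup.
  pose proof (K_pos g Hg) as HK. pose proof (N_pos g Hg) as HN.
  assert (HA : ln (1 / x) = 2 * ln (Kf g) - ln (Nf g)).
  { rewrite ln_inv1 by lra. rewrite Hxg, phi_eq. unfold Rdiv.
    rewrite ln_mult, ln_Rinv, ln_pow by (try apply Rinv_0_lt_compat; try apply pow_lt; lra). simpl. ring. }
  rewrite HA.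
  pose proof (Phi4_nn g Hg) as P4. unfold Phi4 in P4.
  pose proof ln2_pos.
  assert (Hln2x : ln (2 * x) < 0) by (rewrite <- ln_1; apply ln_increasing; lra).
  rewrite ln_mult in Hln2x by lra.
  assert (HA0 : 0 < 2 * ln (Kf g) - ln (Nf g)).
  { rewrite <- HA, ln_inv1 by lra. lra. }
  assert (Hlow : 2 * ln (Kf g) - ln (Nf g) < Gv g) by (pose proof ln2_ub; lra).
  set (A := 2 * ln (Kf g) - ln (Nf g)) in *.
  unfold ball; simpl; unfold AbsRing_ball, abs, minus, plus, opp; simpl.
  assert (H1 : 1 < Gv g / A).
  { apply Rmult_lt_reg_r with A; [lra|]. unfold Rdiv. rewrite Rmult_assoc, Rinv_l, Rmult_1_r by lra. lra. }
  assert (H2 : Gv g / A <= 1 + e).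
  { apply Rmult_le_reg_r with A; [lra|]. unfold Rdiv. rewrite Rmult_assoc, Rinv_l, Rmult_1_r by lra. lra. }
  rewrite Rabs_pos_eq by lra. unfold e in H2. destruct eps; simpl in *. lra.
Qed.

Lemma half_case :
     4 * (1/2) * (1 - 1/2) * log2 (1 / (1/2 * (1 - 1/2))) >= 1/2 * G (1 / (1/2)) /\
     1/2 * G (1 / (1/2)) >= 1/2 * (1 - 1/2) * (4 + ln (1 / (4 * (1/2) * (1 - 1/2)))) /\
     2 * (1/2) * log2 (1 / (1/2)) >= 1/2 * G (1 / (1/2)) /\
     1/2 * G (1 / (1/2)) >= 1/2 * (2 + ln (1 / (2 * (1/2)))).
Proof.
  replace (1 / (1/2)) with 2 by field.
  assert (HG : G 2 = 2) by (unfold G; destruct (Req_EM_T 2 2); [reflexivity|lra]).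
  rewrite HG. unfold log2.
  replace (1 / (1/2 * (1 - 1/2))) with (2 * 2) by field.
  replace (1 / (4 * (1/2) * (1 - 1/2))) with 1 by field.
  replace (1 / (2 * (1/2))) with 1 by field.
  rewrite ln_1, ln_mult by lra. pose proof ln2_pos.
  replace ((ln 2 + ln 2) / ln 2) with 2 by (field; lra).
  replace (ln 2 / ln 2) with 1 by (field; lra). lra.
Qed.

Theorem corollary3p1 :
  (forall x : R, 0 < x <= 1 / 2 ->
     4 * x * (1 - x) * log2 (1 / (x * (1 - x))) >= x * G (1 / x) /\
     x * G (1 / x) >= x * (1 - x) * (4 + ln (1 / (4 * x * (1 - x)))) /\
     2 * x * log2 (1 / x) >= x * G (1 / x) /\
     x * G (1 / x) >= x * (2 + ln (1 / (2 * x)))) /\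
  filterlim (fun x => G (1 / x) / ln (1 / x)) (at_right 0) (locally 1).
Proof.
  split; [|exact limit_part].
  intros x [Hx0 Hx1]. destruct (Req_dec x (1/2)) as [->|Hne]; [exact half_case|apply key; lra].
Qed.
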